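(* Let $\mathcal{P}'$ be a set of pairwise edge-intersecting paths in a Helly $B_k$-EPG representation of a graph $G$. Then the intersection of all paths of $\mathcal{P}'$ contains at least one relevant edge (of some path of the representation).
   Context: A grid is the set of integer points of the plane; a grid edge joins two grid points at distance $1$. A path in the grid is a sequence of distinct grid edges in which consecutive edges share exactly one grid point and non-consecutive edges share none; a bend is a pair of consecutive edges with different directions (horizontal/vertical), these being bend edges. The first and last edges of a path are its extremity edges; relevant edges of a path are its extremity and bend edges. An EPG representation of $G$ is a family $(P_v)_{v\in V(G)}$ of grid paths such that distinct $u,v$ are adjacent iff $P_u,P_v$ share a grid edge; it is $B_k$-EPG if every path has at most $k$ bends, and Helly if every subfamily of pairwise edge-intersecting paths has a grid edge common to all its members. *)

(* Defs.v *)
From mathcomp Require Import all_boot all_order all_algebra.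
Set Implicit Arguments. Unset Strict Implicit. Unset Printing Implicit Defensive.
Import GRing.Theory Num.Theory.
Local Open Scope ring_scope.

Definition gpoint := (int * int)%type.

(* A grid edge is encoded canonically by its lower/left endpoint and its
   direction: (p, true) is the horizontal edge joining p and p + (1,0),
   (p, false) is the vertical edge joining p and p + (0,1).  This is a
   bijection with the set of unordered pairs of grid points at distance 1. *)
Definition gedge := (gpoint * bool)%type.

Definition horizontal (e : gedge) : bool := e.2.

Definition ends (e : gedge) : seq gpoint :=
  let: ((x, y), h) := e in
  [:: (x, y); if h then (x + 1, y) else (x, y + 1)].

Definition nshared (e f : gedge) : nat :=
  size [seq q <- ends e | q \in ends f].

Definition is_gpath (p : seq gedge) : Prop :=
  [/\ p != [::], uniq p &
   forall i j : nat, (i < j < size p)%N ->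
     (j = i.+1 -> nshared (nth (0, 0, true) p i) (nth (0, 0, true) p j) = 1%N) /\
     ((i.+1 < j)%N -> nshared (nth (0, 0, true) p i) (nth (0, 0, true) p j) = 0%N)].

Definition bend_at (p : seq gedge) (i : nat) : bool :=
  (i.+1 < size p)%N &&
  (horizontal (nth (0, 0, true) p i) != horizontal (nth (0, 0, true) p i.+1)).

Definition nbends (p : seq gedge) : nat :=
  count (bend_at p) (iota 0 (size p).-1).

Definition relevant (p : seq gedge) (e : gedge) : Prop :=
  [\/ p != [::] /\ e = head (0, 0, true) p,
      p != [::] /\ e = last (0, 0, true) p
    | exists i : nat, bend_at p i /\
        (e = nth (0, 0, true) p i \/ e = nth (0, 0, true) p i.+1)].

Definition edge_intersect (p q : seq gedge) : Prop := exists e, e \in p /\ e \in q.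

Definition EPG_rep (V : finType) (adj : rel V) (P : V -> seq gedge) : Prop :=
  (forall v, is_gpath (P v)) /\
  (forall u v, u != v -> (adj u v <-> edge_intersect (P u) (P v))).

Definition Bk_EPG (k : nat) (V : finType) (adj : rel V) (P : V -> seq gedge) : Prop :=
  EPG_rep adj P /\ forall v, (nbends (P v) <= k)%N.

Definition Helly_family (V : finType) (P : V -> seq gedge) : Prop :=
  forall S : {set V},
    (forall u v, u \in S -> v \in S -> edge_intersect (P u) (P v)) ->
    exists e : gedge, forall v, v \in S -> e \in P v.

(* Main.v *)
Require Import Defs.
From mathcomp Require Import all_boot all_order all_algebra.
From mathcomp Require Import zify.
Set Implicit Arguments. Unset Strict Implicit.

Local Open Scope ring_scope.

Lemma nsh1 x y (h : bool) bx By : nshared ((x,y),h) ((bx,By),h) = 1%N ->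
  (bx,By) = (if h then (x-1,y) else (x,y-1)) \/ (bx,By) = (if h then (x+1,y) else (x,y+1)).
Proof.
case: h; rewrite /nshared /= !inE !xpair_eqE;
repeat (case: eqP => /= ?); move=> //= _;
first [ by left; congr pair; lia | by right; congr pair; lia | lia ].
Qed.

Lemma nsh1' x y (h : bool) bx By : nshared ((bx,By),h) ((x,y),h) = 1%N ->
  (bx,By) = (if h then (x-1,y) else (x,y-1)) \/ (bx,By) = (if h then (x+1,y) else (x,y+1)).
Proof.
case: h; rewrite /nshared /= !inE !xpair_eqE;
repeat (case: eqP => /= ?); move=> //= _;
first [ by left; congr pair; lia | by right; congr pair; lia | lia ].
Qed.

Lemma nshared_refl (e : gedge) : nshared e e <> 0%N.
Proof. by case: e => [[x y] h]; rewrite /nshared /= inE eqxx. Qed.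

Lemma geo2 (a b f1 f2 : gedge) : horizontal b = horizontal a ->
  horizontal f1 = horizontal a -> horizontal f2 = horizontal a ->
  nshared a b = 1%N -> nshared f1 a = 1%N -> nshared a f2 = 1%N ->
  nshared f1 f2 = 0%N -> b = f1 \/ b = f2.
Proof.
case: a => [[x y] h]; case: b => [[bx By] hb]; case: f1 => [[cx cy] hc];
case: f2 => [[dx dy] hd].
rewrite /horizontal /= => -> -> -> Hb H1 H2 H0.
move: (nsh1 Hb) (nsh1' H1) (nsh1 H2) => [] Eb [] E1 [] E2;
rewrite ?Eb ?E1 ?E2 in H0 *; auto; exfalso; exact: (nshared_refl H0).
Qed.

Theorem corollary3p1 (k : nat) (V : finType) (adj : rel V)
    (Hsym : symmetric adj) (Hirr : irreflexive adj) (P : V -> seq gedge)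
    (HB : Bk_EPG k adj P) (HH : Helly_family P)
    (S : {set V}) (HS0 : S != set0)
    (HS : forall u v, u \in S -> v \in S -> edge_intersect (P u) (P v)) :
  exists (w : V) (e : gedge), relevant (P w) e /\ forall v, v \in S -> e \in P v.
Proof.
have [[Hpath _] _] := HB.
have [e0 He0] := HH S HS.
have [v0 Hv0] : exists v0, v0 \in S by case/set0Pn: HS0 => v0; exists v0.
pose d : gedge := (0, 0, true).
pose p := P v0.
pose I (e : gedge) := [forall v, (v \in S) ==> (e \in P v)].
have IP e : I e -> forall v, v \in S -> e \in P v.
  by move=> H v Hv; exact: (implyP (forallP H v) Hv).
have exj : exists j, (j < size p)%N && I (nth d p j).
  exists (index e0 p); rewrite index_mem (He0 _ Hv0) /= nth_index ?(He0 _ Hv0) //.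
  by apply/forallP => v; apply/implyP; exact: He0.
have bnd : forall j, (j < size p)%N && I (nth d p j) -> (j <= size p)%N.
  by move=> j /andP[/ltnW].
case: (ex_maxnP exj bnd) => j /andP[Hj Ij] Hmax.
have Ia := IP _ Ij.
case: (Hpath v0) => pnil puniq Hp.
case: (ltnP j.+1 (size p)) => Hj1; last first.
  exists v0, (nth d p j); split => //; apply: Or32; split => //.
  rewrite -nth_last; congr nth; move: Hj Hj1; rewrite /p.
  case: (size (P v0)) => // n; rewrite !ltnS /= => a1 a2; apply/eqP; by rewrite eqn_leq a1 a2.
have nIb : ~~ I (nth d p j.+1).
  apply/negP => Ib; have := Hmax j.+1; rewrite Hj1 Ib => /(_ isT); by rewrite ltnn.
move/forallPn: nIb => [v]; rewrite negb_imply => /andP[Hv nb].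
case Hbend: (bend_at p j).
  exists v0, (nth d p j); split => //; apply: Or33; exists j; split => //; by left.
have Hhab : horizontal (nth d p j.+1) = horizontal (nth d p j).
  rewrite /bend_at Hj1 /= in Hbend; by move/negbFE/eqP: Hbend.
have Hab : nshared (nth d p j) (nth d p j.+1) = 1%N.
  have := Hp j j.+1; rewrite ltnSn Hj1 => /(_ isT) [H1 _]; exact: H1.
pose q := P v.
have aq : nth d p j \in q := Ia v Hv.
case: (Hpath v) => qnil quniq Hq.
have Hm : (index (nth d p j) q < size q)%N by rewrite index_mem.
have qm : nth d q (index (nth d p j) q) = nth d p j by rewrite nth_index.
move: Hm qm; set m := index _ q => Hm qm.
case Hm0: m => [|m'].
  exists v, (nth d p j); split => //; apply: Or31; split => //.
  by rewrite -nth0 -Hm0 qm.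
case: (ltnP m.+1 (size q)) => Hm1; last first.
  exists v, (nth d p j); split => //; apply: Or32; split => //.
  rewrite -nth_last -qm; congr nth; move: Hm Hm1.
  case: (size q) => // n; rewrite !ltnS /= => a1 a2; apply/eqP; by rewrite eqn_leq a1 a2.
rewrite Hm0 in Hm1 qm.
case Hb1: (bend_at q m').
  exists v, (nth d p j); split => //; apply: Or33; exists m'; split => //; by right.
case Hb2: (bend_at q m'.+1).
  exists v, (nth d p j); split => //; apply: Or33; exists m'.+1; split => //; by left.
exfalso.
have Hh1 : horizontal (nth d q m') = horizontal (nth d p j).
  rewrite /bend_at (ltnW Hm1) /= qm in Hb1; by move/negbFE/eqP: Hb1.
have Hh2 : horizontal (nth d q m'.+2) = horizontal (nth d p j).
  rewrite /bend_at Hm1 /= qm in Hb2; by move/negbFE/eqP: Hb2 => <-.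
have H1 : nshared (nth d q m') (nth d p j) = 1%N.
  have := Hq m' m'.+1; rewrite ltnSn (ltnW Hm1) => /(_ isT) [H _]; by rewrite -qm; exact: H.
have H2 : nshared (nth d p j) (nth d q m'.+2) = 1%N.
  have := Hq m'.+1 m'.+2; rewrite ltnSn Hm1 => /(_ isT) [H _]; by rewrite -qm; exact: H.
have H0 : nshared (nth d q m') (nth d q m'.+2) = 0%N.
  have := Hq m' m'.+2; rewrite Hm1 andbT ltnS leqnSn => /(_ isT) [_ H]; exact: H.
case: (geo2 Hhab Hh1 Hh2 Hab H1 H2 H0) => Eb; move: nb; rewrite Eb.
  by rewrite mem_nth // (ltn_trans (ltnSn m') (ltnW Hm1)).
by rewrite mem_nth.
Qed.
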